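(* Let $D=2$, $C/2<K<C$, $U=rC$ and $\bar a=rK$ for some positive integer $r$, and let all user and creator types be drawn i.i.d. from the uniform distribution on $\{x\in\mathbb R^2_{\ge0}:\|x\|_2=1\}$, with creators indexed $1,\dots,C$ in increasing order of the angle of their type. Then the set of creators that stay after $t=0$ under the user-centric recommendation $UC_0$ (i.e. $\mathcal C_1$) is of the form $\{i,i+1,\dots,j\}$ for some $i,j\in[1,C]$, and $j-i+1\le K$; that is, at most $K$ creators stay.
   Context: Users $\mathcal U_0=\{1,\dots,U\}$, creators $\mathcal C_0=\{1,\dots,C\}$. At $t=0$ the user-centric recommendation assigns each user $i$ the set $UC_0(i)\in\arg\max_{S\subseteq\mathcal C_0,|S|\le K}\sum_{j\in S}u_i^Tc_j$. Creator $j$ stays after $t=0$ if $|\{i\in\mathcal U_0:j\in UC_0(i)\}|\ge\bar a$. *)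

(* Defs.v *)
From HB Require Import structures.
From mathcomp Require Import all_boot all_order all_algebra.
From mathcomp Require Import all_classical all_reals all_analysis.
Set Implicit Arguments. Unset Strict Implicit. Unset Printing Implicit Defensive.
Import Order.TTheory GRing.Theory Num.Theory.
Local Open Scope ring_scope.

(* A type in the support of the uniform distribution on
   {x in R^2_{>=0} : ||x||_2 = 1}: the point of angle t, 0 <= t <= pi/2. *)
Definition typ {R : realType} (t : R) : R * R := (cos t, sin t).

Definition dot {R : realType} (x y : R * R) : R := x.1 * y.1 + x.2 * y.2.

(* Relevance u_i^T c_j of creator j for user i; theta = user angles,
   phi = creator angles. *)
Definition score {R : realType} {U C : nat}
  (theta : 'I_U -> R) (phi : 'I_C -> R) (i : 'I_U) (j : 'I_C) : R :=
  dot (typ (theta i)) (typ (phi j)).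

Definition is_UC_choice {R : realType} {U C : nat} (K : nat)
  (theta : 'I_U -> R) (phi : 'I_C -> R) (i : 'I_U) (S : {set 'I_C}) : Prop :=
  (#|S| <= K)%N /\
  forall S' : {set 'I_C}, (#|S'| <= K)%N ->
    \sum_(j in S') score theta phi i j <= \sum_(j in S) score theta phi i j.

Definition stays {U C : nat} (UC : 'I_U -> {set 'I_C}) (abar : nat)
  (j : 'I_C) : bool :=
  (abar <= #|[set i : 'I_U | j \in UC i]|)%N.

(* Main.v *)
Require Import Defs.
From HB Require Import structures.
From mathcomp Require Import all_boot all_order all_algebra.
From mathcomp Require Import all_classical all_reals all_analysis.
From mathcomp Require Import zify lra.
Import Order.TTheory GRing.Theory Num.Theory.
Local Open Scope ring_scope.

Section Helpers.
Variable R : realType.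

Lemma cardU_bound C (A : {set 'I_C}) lo hi :
  (forall x : 'I_C, x \in A -> (lo <= x < hi)%N) -> (#|A| <= hi - lo)%N.
Proof.
move=> H.
rewrite cardE -(size_map val) -(size_iota lo (hi - lo)).
apply: uniq_leq_size; first by rewrite map_inj_uniq ?enum_uniq //; exact: val_inj.
move=> y /mapP [x]; rewrite mem_enum => /H hx ->.
rewrite mem_iota; move: hx; case: x => x0 ? /=; lia.
Qed.

Lemma cardL_bound C (A : {set 'I_C}) lo hi : (hi <= C)%N ->
  (forall x : 'I_C, (lo <= x < hi)%N -> x \in A) -> (hi - lo <= #|A|)%N.
Proof.
move=> hC H. rewrite cardE -(size_map val) -(size_iota lo (hi - lo)).
apply: uniq_leq_size; first exact: iota_uniq.
move=> y; rewrite mem_iota => hy.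
have yC : (y < C)%N by lia.
apply/mapP; exists (Ordinal yC) => //; rewrite mem_enum; apply: H => /=; lia.
Qed.

Section Max.
Variables (C K : nat) (f : 'I_C -> R) (S : {set 'I_C}).
Hypothesis hS : (#|S| <= K)%N.
Hypothesis hmax : forall S' : {set 'I_C}, (#|S'| <= K)%N ->
  \sum_(j in S') f j <= \sum_(j in S) f j.

Lemma swap_le j k : j \notin S -> k \in S -> f j <= f k.
Proof.
move=> jS kS.
have jSk : j \notin S :\ k by rewrite !inE (negbTE jS) andbF.
have e : #|S| = (#|S :\ k|).+1 by rewrite (cardsD1 k S) kS.
have := hmax (j |: (S :\ k)).
rewrite cardsU1 jSk (big_setU1 _ jSk) (big_setD1 _ kS) /=.
move=> /(_ _); rewrite lerD2r; apply; apply: (leq_trans _ hS); rewrite e; exact: leqnn.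
Qed.

Lemma add_le j : j \notin S -> (#|S| < K)%N -> f j <= 0.
Proof.
move=> jS hlt.
have := hmax (j |: S).
rewrite cardsU1 jS (big_setU1 _ jS) /= => /(_ _).
move=> h; have {}h := h hlt; lra.
Qed.

Lemma user_struct (hKC : (K < C)%N)
  (hQ : forall j k l : 'I_C, (j < k < l)%N -> f j < f k \/ f l < f k)
  (hZ : forall j l : 'I_C, j != l -> 0 < f j \/ 0 < f l) :
  #|S| = K /\ (forall j k l : 'I_C, (j < k < l)%N -> j \in S -> l \in S -> k \in S).
Proof.
split.
- apply/eqP; rewrite eqn_leq hS /= leqNgt; apply/negP => hlt.
  have e : (#|S| + #|~: S| = C)%N by rewrite cardsC card_ord.
  have hlt2 : (#|S| < K)%N := hlt.
  have : (1 < #|~: S|)%N by clear -e hlt2 hKC; lia.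
  case/card_gt1P => [x [y [hx hy hxy]]]; rewrite !inE in hx hy.
  have h1 := add_le _ hx hlt; have h2 := add_le _ hy hlt.
  case: (hZ x y hxy) => h; [by move: h; rewrite ltNge h1 | by move: h; rewrite ltNge h2].
- move=> j k l hjkl jS lS; apply/negPn/negP => kS.
  have h1 := swap_le _ _ kS jS; have h2 := swap_le _ _ kS lS.
  case: (hQ j k l hjkl) => h; [by move: h; rewrite ltNge h1 | by move: h; rewrite ltNge h2].
Qed.
End Max.

Section Struct.
Variables (C K : nat) (S : {set 'I_C}).
Hypothesis hsz : #|S| = K.
Hypothesis hcv : forall j k l : 'I_C, (j < k < l)%N -> j \in S -> l \in S -> k \in S.

Lemma D1 (j k : 'I_C) : (j < k)%N -> (k < K)%N -> j \in S -> k \in S.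
Proof.
move=> jk kK jS; apply/negPn/negP => kS.
have : (#|S| <= k - 0)%N.
  apply: cardU_bound => x xS; rewrite leq0n /= ltnNge; apply/negP => kx.
  rewrite leq_eqVlt in kx; case/orP: kx => [/eqP e | kx].
    have ex : k = x by apply: val_inj.
    by rewrite ex xS in kS.
  by move: kS; rewrite (hcv j k x) // jk kx.
lia.
Qed.

Lemma D2 (k l : 'I_C) : (C - K <= k)%N -> (k < l)%N -> l \in S -> k \in S.
Proof.
move=> kK kl lS; apply/negPn/negP => kS.
have : (#|S| <= C - k.+1)%N.
  apply: cardU_bound => x xS; rewrite ltn_ord andbT ltnNge; apply/negP => kx.
  rewrite leq_eqVlt in kx; case/orP: kx => [/eqP e | kx].
    have ex : x = k by apply: val_inj.
    by rewrite -ex xS in kS.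
  by move: kS; rewrite (hcv x k l) // kx kl.
have := ltn_ord k; lia.
Qed.

Lemma D3 (a b : 'I_C) : (a + K <= b)%N -> a \in S -> b \in S -> False.
Proof.
move=> ab aS bS.
have : (b.+1 - a <= #|S|)%N.
  apply: cardL_bound; first exact: ltn_ord.
  move=> x /andP [h1 h2].
  rewrite leq_eqVlt in h1; case/orP: h1 => [/eqP e | h1].
    by have -> : x = a by apply: val_inj.
  rewrite ltnS leq_eqVlt in h2; case/orP: h2 => [/eqP e | h2].
    by have -> : x = b by apply: val_inj.
  by apply: (hcv a x b) => //; rewrite h1 h2.
lia.
Qed.
End Struct.

Lemma score_cos U C (theta : 'I_U -> R) (phi : 'I_C -> R) i j :
  score theta phi i j = cos (theta i - phi j).
Proof. by rewrite /score /dot /typ /= cosB. Qed.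

Lemma cos_lt_norm (x y : R) : `|x| < `|y| -> `|y| <= pi -> cos y < cos x.
Proof.
move=> hxy hy; rewrite -(cos_norm x) -(cos_norm y) ltr_cos // !in_itv /=
  ?normr_ge0 //= ?hy //.
exact: (le_trans (ltW hxy) hy).
Qed.

End Helpers.

Lemma hQ_lem (R : realType) C (t : R) (phi : 'I_C -> R)
  (ht : 0 <= t <= pi / 2)
  (hphi : forall j, 0 <= phi j <= pi / 2)
  (hinc : forall j k : 'I_C, (j < k)%N -> phi j < phi k) :
  forall j k l : 'I_C, (j < k < l)%N ->
    cos (t - phi j) < cos (t - phi k) \/ cos (t - phi l) < cos (t - phi k).
Proof.
move=> j k l /andP[jk kl].
have h1 := hinc _ _ jk; have h2 := hinc _ _ kl.
case/andP: ht => t0 t1.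
case/andP: (hphi j) => j0 j1; case/andP: (hphi k) => k0 k1;
  case/andP: (hphi l) => l0 l1.
have p0 := pi_gt0 R.
case: (lerP 0 (t - phi k)) => hk.
- left; apply: cos_lt_norm.
  + rewrite (ger0_norm hk) ger0_norm; lra.
  + rewrite ger0_norm; lra.
- right; apply: cos_lt_norm.
  + rewrite (ltr0_norm hk) ltr0_norm; lra.
  + rewrite ltr0_norm; lra.
Qed.

Lemma cos_le0_edge (R : realType) (d : R) : -(pi/2) <= d <= pi / 2 ->
  cos d <= 0 -> d = pi / 2 \/ d = -(pi/2).
Proof.
case/andP=> d0 d1 hc.
case: (ltrP (-(pi/2)) d) => h1; last by right; lra.
case: (ltrP d (pi/2)) => h2; last by left; lra.
have : 0 < cos d by apply: cos_gt0_pihalf; rewrite h1 h2.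
by rewrite ltNge hc.
Qed.

Lemma hZ_lem (R : realType) C (t : R) (phi : 'I_C -> R)
  (ht : 0 <= t <= pi / 2)
  (hphi : forall j, 0 <= phi j <= pi / 2)
  (hinc : forall j k : 'I_C, (j < k)%N -> phi j < phi k) :
  forall j l : 'I_C, j != l -> 0 < cos (t - phi j) \/ 0 < cos (t - phi l).
Proof.
move=> j l jl.
case: (ltrP 0 (cos (t - phi j))) => hj; first by left.
case: (ltrP 0 (cos (t - phi l))) => hl; first by right.
exfalso.
case/andP: ht => t0 t1.
case/andP: (hphi j) => j0 j1; case/andP: (hphi l) => l0 l1.
have p0 := pi_gt0 R.
have ej : (t - phi j = pi / 2 \/ t - phi j = -(pi/2)).
  by apply: cos_le0_edge => //; apply/andP; split; lra.
have el : (t - phi l = pi / 2 \/ t - phi l = -(pi/2)).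
  by apply: cos_le0_edge => //; apply/andP; split; lra.
case: (ltngtP j l) => [h|h|h].
- have := hinc _ _ h; case: ej => ?; case: el => ?; lra.
- have := hinc _ _ h; case: ej => ?; case: el => ?; lra.
- by move: jl; rewrite (val_inj h) eqxx.
Qed.

Theorem lemma12 (R : realType) (C K r : nat)
  (hr : (0 < r)%N) (hK1 : (C < 2 * K)%N) (hK2 : (K < C)%N)
  (theta : 'I_(r * C) -> R) (phi : 'I_C -> R)
  (htheta : forall i, 0 <= theta i <= pi / 2)
  (hphi : forall j, 0 <= phi j <= pi / 2)
  (hinc : forall j k : 'I_C, (j < k)%N -> phi j < phi k)
  (UC : 'I_(r * C) -> {set 'I_C})
  (hUC : forall i, is_UC_choice K theta phi i (UC i)) :
  exists i j : 'I_C,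
    [set k : 'I_C | stays UC (r * K) k] = [set k : 'I_C | (i <= k <= j)%N]
    /\ (i <= j)%N /\ (j - i + 1 <= K)%N.
Proof.
have hK0 : (0 < K)%N by lia.
have hst : forall u, #|UC u| = K /\ (forall j k l : 'I_C, (j < k < l)%N ->
    j \in UC u -> l \in UC u -> k \in UC u).
  move=> u; case: (hUC u) => hS hmax.
  apply: (@user_struct R C K (score theta phi u) (UC u) hS hmax hK2).
  + move=> j k l hjkl; rewrite !score_cos; exact: hQ_lem.
  + move=> j l hjl; rewrite !score_cos; exact: hZ_lem.
have hcnt : forall A : {set 'I_(r * C)}, (#|A| <= r * C)%N.
  by move=> A; apply: (leq_trans (max_card _)); rewrite card_ord.
have mC : (K.-1 < C)%N by lia.
pose m := Ordinal mC.
have Pm : stays UC (r * K) m.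
  rewrite /stays.
  have -> : [set u | m \in UC u] = [set: 'I_(r * C)].
    apply/setP => u; rewrite !inE.
    case: (hst u) => hsz hcv.
    have : (0 < #|UC u|)%N by rewrite hsz.
    case/card_gt0P => x hx.
    case: (ltngtP x m) => [h|h|h].
    - have hmK : (m < K)%N by rewrite /=; lia.
      exact: (D1 _ _ _ hsz hcv _ _ h hmK hx).
    - have hmK : (C - K <= m)%N by rewrite /=; lia.
      exact: (D2 _ _ _ hsz hcv _ _ hmK h hx).
    - by have <- : x = m by apply: val_inj.
  by rewrite cardsT card_ord leq_pmul2l // ltnW.
have cvx : forall j k l : 'I_C, (j < k < l)%N -> stays UC (r * K) j ->
    stays UC (r * K) l -> stays UC (r * K) k.
  move=> j k l /andP[jk kl]; rewrite /stays => Pj Pl.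
  case: (ltnP k K) => hk.
  - apply: (leq_trans Pj); apply: subset_leq_card; apply/fintype.subsetP => u.
    rewrite !inE => ju; case: (hst u) => hsz hcv; exact: (D1 _ _ _ hsz hcv _ _ jk hk ju).
  - apply: (leq_trans Pl); apply: subset_leq_card; apply/fintype.subsetP => u.
    rewrite !inE => lu; case: (hst u) => hsz hcv.
    apply: (D2 _ _ _ hsz hcv _ _ _ kl lu); lia.
have sz : forall a b : 'I_C, stays UC (r * K) a -> stays UC (r * K) b ->
    (a + K <= b)%N -> False.
  move=> a b; rewrite /stays => Pa Pb ab.
  have disj : [set u | a \in UC u] :&: [set u | b \in UC u] = finset.set0.
    apply/setP => u; rewrite !inE; apply/negbTE/negP => /andP[ha hb].
    case: (hst u) => hsz hcv; exact: (D3 _ _ _ hsz hcv _ _ ab ha hb).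
  have := cardsUI [set u | a \in UC u] [set u | b \in UC u].
  rewrite disj cards0 addn0 => e.
  have := hcnt ([set u | a \in UC u] :|: [set u | b \in UC u]).
  rewrite e => h.
  have h2 := leq_trans (leq_add Pa Pb) h.
  have : (r * C < r * (2 * K))%N by rewrite ltn_pmul2l.
  move: h2; rewrite mul2n -addnn mulnDr.
  move: (r * K) (r * C) => x y; lia.
case: (arg_minnP (fun k : 'I_C => nat_of_ord k) Pm) => i Pi mini.
case: (arg_maxnP (fun k : 'I_C => nat_of_ord k) Pm) => j Pj maxj.
exists i, j; split; last split.
- apply/setP => k; rewrite !inE; apply/idP/idP.
  + by move=> Pk; rewrite (mini _ Pk) /=; exact: (maxj _ Pk).
  + case/andP => ik kj.
    rewrite leq_eqVlt in ik; case/orP: ik => [/eqP e | ik].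
      by have <- : i = k by apply: val_inj.
    rewrite leq_eqVlt in kj; case/orP: kj => [/eqP e | kj].
      by have -> : k = j by apply: val_inj.
    by apply: (cvx i k j) => //; rewrite ik kj.
- exact: mini.
- rewrite leqNgt; apply/negP => h; apply: (sz i j Pi Pj); lia.
Qed.
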